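(* Let $\gamma \ge 1$ be an integer, let $\Gamma$ be a set of $\gamma$ nodes and let $u \notin \Gamma$ be a further node. Set $p = \frac{1}{1+\gamma}$. Perform $r$ independent runs; in each run, every node of $\Gamma \cup \{u\}$ is dropped independently with probability $p$. For $v \in \Gamma$, let $X_v$ be the number of runs in which the set of dropped nodes of $\Gamma \cup \{u\}$ is exactly $\{v\}$ (a ''$1$-dropout of $v$''), and let $\mathbb{E}_1 = r \cdot p\,(1-p)^{\gamma}$ (the common expected value of the $X_v$). Fix $\delta \in (0,1]$. Then there is a constant $C>0$ depending only on $\delta$ such that for every $t>1$ and every $r \ge C\,(\gamma+1)\log(2\gamma t)$ (i.e. $r = \Omega(\gamma \log \gamma t)$), with probability at least $1-\frac{1}{t}$ it holds simultaneously for every $v \in \Gamma$ that $$(1-\delta)\,\mathbb{E}_1 \le X_v \le (1+\delta)\,\mathbb{E}_1 .$$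
   Context: This models a Dropout GNN (DropGNN): the GNN is executed in $r$ independent runs, and in each run each node is removed (''dropped'') independently with probability $p$. $\Gamma$ is the ''neighborhood of interest'' around the node $u$, of size $\gamma = |\Gamma|$ (not counting $u$). For a subset $S \subseteq \Gamma$, an $|S|$-dropout of $S$ in a run means that exactly the nodes of $S$ (and not $u$, nor any other node of $\Gamma$) are dropped in that run. The choice $p = 1/(1+\gamma)$ maximizes the probability $p(1-p)^\gamma$ of a given $1$-dropout. *)

(* Defs.v *)
From HB Require Import structures.
From mathcomp Require Import all_boot all_order all_algebra.
From mathcomp Require Import reals exp.
Set Implicit Arguments. Unset Strict Implicit. Unset Printing Implicit Defensive.
Import Order.TTheory GRing.Theory Num.Theory.
Local Open Scope ring_scope.

(* Nodes: a finite type [T] = Gamma ∪ {u}.  An outcome of [r] runs records,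
   for each run, the set of dropped nodes. *)
Section DropGNN.
Variables (R : realType) (T : finType) (r : nat) (p : R).

Definition outcome := {ffun 'I_r -> {set T}}.

Definition run_prob (S : {set T}) : R :=
  \prod_(x : T) (if x \in S then p else 1 - p).

Definition outcome_prob (w : outcome) : R := \prod_(i < r) run_prob (w i).

Definition Pr (E : pred outcome) : R := \sum_(w : outcome | E w) outcome_prob w.

Definition X1 (w : outcome) (v : T) : nat := #|[set i : 'I_r | w i == [set v]]|.

End DropGNN.

(* Main.v *)
Require Import Defs.
From HB Require Import structures.
From mathcomp Require Import all_boot all_order all_algebra.
From mathcomp Require Import reals exp sequences.
From mathcomp Require Import ring lra.
Import Order.TTheory GRing.Theory Num.Theory.
Local Open Scope ring_scope.

Section L.
Variables (R : realType) (T : finType).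

Lemma sum_run_prob (p : R) : \sum_(S : {set T}) run_prob p S = 1.
Proof.
rewrite (reindex (fun f : {ffun T -> bool} => [set x | f x])); last first.
  exists (fun S : {set T} => [ffun x => x \in S]) => f _.
    by apply/ffunP => x; rewrite ffunE inE.
  by apply/setP => x; rewrite inE ffunE.
rewrite /run_prob.
under eq_bigr => f _ do under eq_bigr => x _ do rewrite inE.
rewrite -(bigA_distr_bigA (fun (x : T) (b : bool) => if b then p else 1 - p)) /=.
apply: big1 => x _.
by rewrite big_bool /=; ring.
Qed.

Lemma run_prob1 (p : R) (v : T) : run_prob p [set v] = p * (1 - p) ^+ #|T|.-1.
Proof.
rewrite /run_prob (bigD1 v) //= inE eqxx; congr (_ * _).
rewrite -(cardC1 v) -prodr_const; apply: eq_big => x //.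
by rewrite inE => /negPf ->.
Qed.

Lemma mgf (r : nat) (p a : R) (v : T) :
  \sum_(w : outcome T r) outcome_prob p w * a ^+ X1 w v
  = (1 + (a - 1) * run_prob p [set v]) ^+ r.
Proof.
have E : forall w : outcome T r, a ^+ X1 w v =
   \prod_(i < r) (if w i == [set v] then a else 1).
  move=> w; rewrite -big_mkcond /= prodr_const /X1; congr (_ ^+ _).
  by apply: eq_card => i; rewrite inE.
under eq_bigr => w _ do rewrite E /outcome_prob -big_split /=.
rewrite -(bigA_distr_bigA (fun (i : 'I_r) (S : {set T}) =>
   run_prob p S * (if S == [set v] then a else 1))) /=.
rewrite prodr_const card_ord; congr (_ ^+ _).
rewrite (bigD1 [set v]) //= eqxx.
have H := sum_run_prob p; rewrite (bigD1 [set v]) //= in H.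
rewrite [X in _ + X](_ : _ = 1 - run_prob p [set v]); first by ring.
rewrite -H addrAC subrr add0r; apply: eq_bigr => S /negPf ->.
by rewrite H mulr1.
Qed.
End L.
Section N.
Variable R : realType.

Lemma up_num (d : R) : 0 < d <= 1 ->
  expR (d / 4) - 1 - d / 4 * (1 + d) <= - (d ^+ 2 / 6).
Proof.
move=> /andP[d0 d1].
have h1 := expR_ge1Dx (- (d / 4)).
rewrite expRN in h1.
set E := expR (d / 4) in h1 *.
have E0 : 0 < E by apply: expR_gt0.
have h2 : E * (1 - d / 4) <= 1.
  have := ler_wpM2l (ltW E0) h1; rewrite mulfV ?gt_eqF //.
have : (1 - d/4) * (1 + d/4 + d^+2/12) >= 1.
  have h : 0 <= d ^+2 * (1 - d) by rewrite mulr_ge0 ?sqr_ge0 // subr_ge0.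
  have -> : (1 - d/4) * (1 + d/4 + d^+2/12) = 1 + d ^+2 * (1 - d) / 48 by field.
  lra.
move=> h3; nra.
Qed.

Lemma lo_num (d : R) : 0 < d <= 1 ->
  expR (- (d / 2)) - 1 + d / 2 * (1 - d) <= - (d ^+ 2 / 6).
Proof.
move=> /andP[d0 d1].
have h1 := expR_ge1Dx (d / 2).
set F := expR (- (d / 2)).
have F0 : 0 < F by apply: expR_gt0.
have h2 : F * (1 + d / 2) <= 1.
  have := ler_wpM2l (ltW F0) h1.
  by rewrite /F expRN mulVf // gt_eqF // expR_gt0.
have : (1 + d/2) * (1 - d/2 + d^+2/3) >= 1.
  have h : 0 <= d ^+3 by apply: exprn_ge0; lra.
  have -> : (1 + d/2) * (1 - d/2 + d^+2/3) = 1 + d^+2 / 12 + d^+3/6 by field.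
  have : 0 <= d ^+2 by apply: sqr_ge0.
  lra.
move=> h3; nra.
Qed.
End N.

Section M.
Variables (R : realType) (T : finType).

Lemma run_prob_ge0 (p : R) S : 0 <= p <= 1 -> 0 <= run_prob p (S : {set T}).
Proof.
move=> /andP[p0 p1]; apply: prodr_ge0 => x _; case: ifP => _ //.
by rewrite subr_ge0.
Qed.

Lemma outcome_prob_ge0 r (p : R) (w : outcome T r) : 0 <= p <= 1 -> 0 <= outcome_prob p w.
Proof. by move=> hp; apply: prodr_ge0 => i _; apply: run_prob_ge0. Qed.

Lemma mgf_exp r (p : R) (v : T) (l c : R) : 0 <= run_prob p [set v] <= 1 ->
  \sum_(w : outcome T r) outcome_prob p w * expR (l * (X1 w v)%:R + c)
  <= expR ((expR l - 1) * (r%:R * run_prob p [set v]) + c).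
Proof.
set q := run_prob p [set v] => /andP[q0 q1].
under eq_bigr => w _ do rewrite expRD expRM_natr mulrA.
rewrite -big_distrl /= mgf -/q expRD ler_wpM2r ?expR_ge0 //.
rewrite (_ : (expR l - 1) * (r%:R * q) = ((expR l - 1) * q) * r%:R); last by ring.
rewrite expRM_natr; apply: lerXn2r; rewrite ?nnegrE ?expR_ge0 ?expR_ge1Dx //.
have := expR_gt0 l; nra.
Qed.
End M.

From mathcomp Require Import zify.

Theorem theorem1 (R : realType) (delta : R) :
  0 < delta <= 1 ->
  exists C : R, 0 < C /\
  forall (T : finType) (u : T),
    (1 < #|T|)%N ->
    let gamma : nat := #|T|.-1 in
    let p : R := 1 / (1 + gamma%:R) in
    forall (t : R), 1 < t ->
    forall (r : nat),
      C * (gamma.+1)%:R * ln (2 * gamma%:R * t) <= r%:R ->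
      let E1 : R := r%:R * p * (1 - p) ^+ gamma in
      1 - 1 / t <=
        Pr p [pred w : outcome T r |
               [forall v in [set~ u],
                  ((1 - delta) * E1 <= (X1 w v)%:R) &&
                  ((X1 w v)%:R <= (1 + delta) * E1)]].
Proof.
move=> /andP[d0 d1].
exists (12 * expR 1 / delta ^+ 2); split.
  by rewrite divr_gt0 ?mulr_gt0 ?expR_gt0 ?exprn_gt0.
move=> T u T1 gamma p t t1 r Hr; cbv zeta.
have g1 : (1 <= gamma)%N by rewrite /gamma; lia.
set g : R := gamma%:R in Hr p *.
have g1R : 1 <= g by rewrite ler1n.
have pg : p * (1 + g) = 1 by rewrite /p div1r mulVf // gt_eqF //; lra.
have p0 : 0 < p by rewrite /p divr_gt0 //; lra.
have p1 : p <= 1 by rewrite /p ler_pdivrMr; lra.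
have p01 : 0 <= p <= 1 by rewrite ltW.
set q := p * (1 - p) ^+ gamma.
have Hq : forall v : T, run_prob p [set v] = q by move=> v; rewrite run_prob1.
have E1q : r%:R * p * (1 - p) ^+ gamma = r%:R * q by rewrite /q mulrA.
rewrite E1q.
have q01 : 0 <= q <= 1.
  rewrite -(Hq u) run_prob_ge0 //= (Hq u).
  rewrite /q; apply: mulr_ile1 => //; first by rewrite ltW.
    by rewrite exprn_ge0 // subr_ge0.
  by rewrite exprn_ile1 // ?subr_ge0 //; lra.
have qe : 1 <= q * expR 1 * (1 + g).
  have -> : q * expR 1 * (1 + g) = (p * (1 + g)) * ((1 - p) ^+ gamma * expR 1) by rewrite /q; ring.
  rewrite pg mul1r.
  have -> : expR 1 = expR (1 / g) ^+ gamma.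
    by rewrite -expRM_natr div1r mulVf // gt_eqF //; lra.
  rewrite -exprMn exprn_ege1 //.
  have e : (1 - p) * (1 + 1 / g) = 1.
    rewrite /p; field; apply/andP; split; rewrite gt_eqF //; lra.
  rewrite -[X in X <= _]e ler_wpM2l ?expR_ge1Dx //.
  by rewrite subr_ge0.
set L := ln (2 * g * t) in Hr *.
have M1 : 1 < 2 * g * t by nra.
have L0 : 0 < L by apply: ln_gt0.
set mu := r%:R * q.
have mu0 : 0 <= mu by rewrite /mu mulr_ge0 // (andP q01).1.
have gS : (gamma.+1)%:R = 1 + g :> R by rewrite -[gamma.+1]add1n natrD.
rewrite gS in Hr.
have Hmu : 12 * L <= delta ^+ 2 * mu.
  have dd : 0 < delta ^+ 2 by rewrite exprn_gt0.
  have a1 : 12 * L / delta^+2 <= 12 * L / delta^+2 * (q * expR 1 * (1 + g)).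
    by rewrite ler_peMr // divr_ge0 ?ltW //; lra.
  have a2 : 12 * L / delta^+2 * (q * expR 1 * (1 + g)) = (12 * expR 1 / delta ^+ 2 * (1+g) * L) * q by ring.
  have a3 : (12 * expR 1 / delta ^+ 2 * (1+g) * L) * q <= r%:R * q by rewrite ler_wpM2r // (andP q01).1.
  have a4 : 12 * L / delta^+2 <= mu by rewrite /mu; apply: le_trans a1 _; rewrite a2.
  have := ler_wpM2l (ltW dd) a4.
  rewrite (_ : delta^+2 * (12 * L / delta^+2) = 12 * L) //; field.
  by rewrite gt_eqF.
have expo : -(delta^+2/6) * mu <= -(2 * L).
  rewrite (_ : -(delta^+2/6) * mu = -(delta^+2 * mu) / 6); last by ring.
  lra.
have dd1 : 0 < delta <= 1 by rewrite d0 d1.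
have qv : forall v : T, 0 <= run_prob p [set v] <= 1 by move=> v; rewrite Hq.
have lo : forall v : T, \sum_(w : outcome T r) outcome_prob p w *
    expR (-(delta/2) * (X1 w v)%:R + delta/2*(1-delta)*mu) <= expR (-(2*L)).
  move=> v; apply: le_trans (@mgf_exp _ _ r p v _ _ (qv v)) _.
  rewrite Hq -/mu ler_expR; apply: le_trans expo.
  have := ler_wpM2r mu0 (@lo_num _ _ dd1).
  by rewrite (_ : (expR (- (delta / 2)) - 1 + delta / 2 * (1 - delta)) * mu =
     (expR (- (delta / 2)) - 1) * mu + delta / 2 * (1 - delta) * mu); last by ring.
have up : forall v : T, \sum_(w : outcome T r) outcome_prob p w *
    expR ((delta/4) * (X1 w v)%:R + -(delta/4*(1+delta)*mu)) <= expR (-(2*L)).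
  move=> v; apply: le_trans (@mgf_exp _ _ r p v _ _ (qv v)) _.
  rewrite Hq -/mu ler_expR; apply: le_trans expo.
  have := ler_wpM2r mu0 (@up_num _ _ dd1).
  by rewrite (_ : (expR (delta / 4) - 1 - delta / 4 * (1 + delta)) * mu =
     (expR (delta / 4) - 1) * mu + - (delta / 4 * (1 + delta) * mu)); last by ring.
set A := fun (v : T) (w : outcome T r) =>
  expR (-(delta/2) * (X1 w v)%:R + delta/2*(1-delta)*mu).
set B := fun (v : T) (w : outcome T r) =>
  expR ((delta/4) * (X1 w v)%:R + -(delta/4*(1+delta)*mu)).
set good := fun w : outcome T r => [forall v in [set~ u],
        ((1 - delta) * mu <= (X1 w v)%:R) && ((X1 w v)%:R <= (1 + delta) * mu)].
have pw : forall w, 1 <= (good w)%:R + \sum_(v in [set~ u]) (A v w + B v w).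
  move=> w; case: (boolP (good w)) => H.
    rewrite lerDl sumr_ge0 // => v _.
    by rewrite addr_ge0 ?expR_ge0.
  rewrite add0r.
  move: H => /forallPn [v]; rewrite negb_imply => /andP [vin Hv].
  rewrite (bigD1 v) //=.
  have rest : 0 <= \sum_(i in [set~ u] | i != v) (A i w + B i w).
    by rewrite sumr_ge0 // => i _; rewrite addr_ge0 ?expR_ge0.
  suff : 1 <= A v w + B v w by lra.
  rewrite negb_and -!ltNge in Hv.
  case/orP: Hv => h.
    have y0 : 0 <= -(delta/2) * (X1 w v)%:R + delta/2*(1-delta)*mu.
      rewrite (_ : _ + _ = delta / 2 * ((1-delta)*mu - (X1 w v)%:R)); last by ring.
      by rewrite mulr_ge0 ?subr_ge0 ?ltW // divr_gt0.
    have := expR_ge1Dx (-(delta/2) * (X1 w v)%:R + delta/2*(1-delta)*mu).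
    have := expR_ge0 ((delta/4) * (X1 w v)%:R + -(delta/4*(1+delta)*mu)).
    rewrite /A /B; lra.
  have y0 : 0 <= (delta/4) * (X1 w v)%:R + -(delta/4*(1+delta)*mu).
    rewrite (_ : _ + _ = delta / 4 * ((X1 w v)%:R - (1+delta)*mu)); last by ring.
    by rewrite mulr_ge0 ?subr_ge0 ?ltW // divr_gt0.
  have := expR_ge1Dx ((delta/4) * (X1 w v)%:R + -(delta/4*(1+delta)*mu)).
  have := expR_ge0 (-(delta/2) * (X1 w v)%:R + delta/2*(1-delta)*mu).
  rewrite /A /B; lra.
have tot : \sum_(w : outcome T r) outcome_prob p w = 1.
  have := @mgf _ _ r p 1 u; rewrite subrr mul0r addr0 expr1n => <-.
  by apply: eq_bigr => w _; rewrite expr1n mulr1.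
have key : 1 <= \sum_(w : outcome T r) outcome_prob p w *
                 ((good w)%:R + \sum_(v in [set~ u]) (A v w + B v w)).
  rewrite -{1}tot; apply: ler_sum => w _.
  by rewrite -[X in X <= _]mulr1 ler_wpM2l ?outcome_prob_ge0.
have Preq : \sum_(w : outcome T r) outcome_prob p w * (good w)%:R =
            Pr p [pred w : outcome T r | good w].
  rewrite /Pr [RHS]big_mkcond /=; apply: eq_bigr => w _.
  by case: (good w); rewrite ?mulr1 ?mulr0.
have bad : \sum_(w : outcome T r) outcome_prob p w *
              \sum_(v in [set~ u]) (A v w + B v w) <= g * (2 * expR (-(2 * L))).
  under eq_bigr => w _ do rewrite big_distrr /=.
  rewrite exchange_big /=.
  apply: le_trans (_ : \sum_(v in [set~ u]) (expR (-(2 * L)) + expR (-(2 * L))) <= _).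
    apply: ler_sum => v _.
    under eq_bigr => w _ do rewrite mulrDr.
    rewrite big_split /=; apply: lerD; [exact: lo | exact: up].
  rewrite sumr_const cardsC1 -/gamma.
  by rewrite /g !mulr_natl mulr2n.
move: key; under eq_bigr => w _ do rewrite mulrDr.
rewrite big_split /= Preq => key.
have fin : g * (2 * expR (-(2 * L))) <= 1 / t.
  have M0 : 0 < 2 * g * t by lra.
  rewrite expRN expRM_natl /L lnK ?posrE //.
  rewrite (_ : g * (2 * ((2 * g * t) ^+ 2)^-1) = 1 / t / (2 * g * t)); last first.
    field; apply/andP; split; rewrite gt_eqF // ?ltr0n //; lra.
  apply: ler_piMr; first by rewrite divr_ge0 //; lra.
  by rewrite invf_le1 // ltW.
have : 1 <= Pr p [pred w : outcome T r | good w] + 1 / t.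
  by apply: le_trans key _; rewrite lerD2l; apply: le_trans bad fin.
rewrite /good; lra.
Qed.
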